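(* Let $T=\{0,\dots,N\}$, let $M_\bullet$ and $P_\bullet$ be filtrations of finite-dimensional vector spaces $M=M_N$ and $P=P_N$ over a field $\mathbb{F}$ indexed by $T$, and let $\phi_\bullet\colon M_\bullet\to P_\bullet$ be a morphism of filtrations, i.e. a linear map $\phi\colon M\to P$ with $\phi(M_t)\subseteq P_t$ for all $t$ and $\phi_t=\phi|_{M_t}\colon M_t\to P_t$. Let $\mathfrak{M}$ be a filtration compatible basis for $M_\bullet$, let $\mathfrak{M}'=\mathfrak{M}\cap\ker\phi$, and assume that $\mathfrak{M}''=(\phi(m))_{m\in\mathfrak{M}\setminus\mathfrak{M}'}$ is a linearly independent family of vectors. Then $\mathfrak{M}'$ is a filtration compatible basis for the filtration $\ker\phi_\bullet$ (with $(\ker\phi_\bullet)_t=\ker\phi_t$), and $\mathfrak{M}''$ is a filtration compatible basis for the filtration $\operatorname{im}\phi_\bullet$ (with $(\operatorname{im}\phi_\bullet)_t=\operatorname{im}\phi_t$). Moreover, \[ \operatorname{supp}_{\ker\phi_\bullet}(m')=\operatorname{supp}_{M_\bullet}(m')\quad\text{and}\quad\operatorname{supp}_{\operatorname{im}\phi_\bullet}(\phi(m))=\operatorname{supp}_{M_\bullet}(m) \] for all $m'\in\mathfrak{M}'$ and all $m\in\mathfrak{M}\setminus\mathfrak{M}'$.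
   Context: A filtration of a vector space $M$ indexed by $T=\{0,\dots,N\}$ is a family of subspaces $M_0\subseteq\dots\subseteq M_N=M$, with structure maps the inclusions. For $m\in M$, its support is $\operatorname{supp}_{M_\bullet}(m)=\{t\in T\mid m\in M_t\}$. A basis $\mathfrak{M}$ of $M$ is filtration compatible if $\mathfrak{M}\cap M_t$ is a basis of $M_t$ for every $t\in T$ (for a family of vectors, this is understood in the same way, the family being a basis of $M$). *)

(* Defs.v *)
From HB Require Import structures.
From mathcomp Require Import all_boot all_order all_algebra.
Set Implicit Arguments. Unset Strict Implicit. Unset Printing Implicit Defensive.
Import GRing.Theory.
Local Open Scope ring_scope.

Definition is_filtration (F : fieldType) (vT : vectType F) (N : nat)
  (Fl : 'I_N.+1 -> {vspace vT}) (U : {vspace vT}) : Prop :=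
  (forall s t : 'I_N.+1, (s <= t)%N -> (Fl s <= Fl t)%VS) /\ Fl ord_max = U.

Definition filt_compat_basis (F : fieldType) (vT : vectType F) (N : nat)
  (Fl : 'I_N.+1 -> {vspace vT}) (B : seq vT) : Prop :=
  forall t : 'I_N.+1, basis_of (Fl t) [seq v <- B | v \in Fl t].

Definition supp (F : fieldType) (vT : vectType F) (N : nat)
  (Fl : 'I_N.+1 -> {vspace vT}) (v : vT) : {set 'I_N.+1} :=
  [set t | v \in Fl t].

Definition ker_filt (F : fieldType) (vT wT : vectType F) (N : nat)
  (phi : 'Hom(vT, wT)) (Fl : 'I_N.+1 -> {vspace vT}) : 'I_N.+1 -> {vspace vT} :=
  fun t => (lker phi :&: Fl t)%VS.

Definition im_filt (F : fieldType) (vT wT : vectType F) (N : nat)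
  (phi : 'Hom(vT, wT)) (Fl : 'I_N.+1 -> {vspace vT}) : 'I_N.+1 -> {vspace wT} :=
  fun t => (phi @: Fl t)%VS.

(* Main.v *)
Require Import Defs.
From HB Require Import structures.
From mathcomp Require Import all_boot all_order all_algebra.
From mathcomp Require Import zify.
Import GRing.Theory.
Local Open Scope ring_scope.

Lemma free_mask_aux (F : fieldType) (vT : vectType F) (m : bitseq) (X : seq vT) :
  free X -> free (mask m X).
Proof.
elim: X m => [|x X IH] [|b m] //=; try by move=> _; apply: nil_free.
rewrite free_cons => /andP[xX fX].
case: b; last exact: IH.
rewrite free_cons IH // andbT; apply: contra xX => h.
have sub : (<<mask m X>> <= <<X>>)%VS.
  by apply/span_subvP => v /mem_mask vX; apply: memv_span.
exact: (subvP sub).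
Qed.

Lemma count_sub_in_aux (T : eqType) (s : seq T) (a b : pred T) :
  {in s, forall x, a x -> b x} -> (count a s <= count b s)%N.
Proof.
elim: s => [|x s IH] //= H.
have Hs : {in s, forall x, a x -> b x}.
  by move=> z zs; apply: H; rewrite inE zs orbT.
have hx := H x (mem_head _ _).
apply: leq_add; last exact: IH.
by move: hx; case: (a x); case: (b x) => // /(_ isT).
Qed.

Lemma count_imp_aux (T : eqType) (s : seq T) (a b : pred T) :
  {in s, forall x, a x -> b x} -> (count b s <= count a s)%N ->
  {in s, forall x, b x = a x}.
Proof.
elim: s => [|x s IH] //= H hc y.
have Hs : {in s, forall x, a x -> b x}.
  by move=> z zs; apply: H; rewrite inE zs orbT.
have hs : (count a s <= count b s)%N.
  exact: count_sub_in_aux.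
have hx := H x (mem_head _ _).
have [eab hcs] : b x = a x /\ (count b s <= count a s)%N.
  move: hx hc; case: (a x); case: (b x) => //= hx hc; try lia.
rewrite inE => /orP [/eqP -> //| ys]; exact: IH.
Qed.

Theorem lemma2p7 (F : fieldType) (vT wT : vectType F) (N : nat)
  (Mf : 'I_N.+1 -> {vspace vT}) (Pf : 'I_N.+1 -> {vspace wT})
  (phi : 'Hom(vT, wT)) (B : seq vT) :
  is_filtration Mf fullv ->
  is_filtration Pf fullv ->
  (forall t : 'I_N.+1, (phi @: Mf t <= Pf t)%VS) ->
  filt_compat_basis Mf B ->
  free [seq phi m | m <- [seq m <- B | phi m != 0]] ->
  [/\ filt_compat_basis (ker_filt phi Mf) [seq m <- B | phi m == 0],
      filt_compat_basis (im_filt phi Mf) [seq phi m | m <- [seq m <- B | phi m != 0]],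
      (forall m, m \in [seq m <- B | phi m == 0] ->
         supp (ker_filt phi Mf) m = supp Mf m)
    & (forall m, m \in [seq m <- B | phi m != 0] ->
         supp (im_filt phi Mf) (phi m) = supp Mf m)].
Proof.
move=> [_ MN] _ _ hB freeIm.
set B2 := [seq m <- B | phi m != 0] in freeIm *.
have freeB : free B.
  have := basis_free (hB ord_max); rewrite MN.
  suff -> : [seq v <- B | v \in fullv] = B by [].
  by apply/all_filterP/allP => v _; apply: memvf.
have key : forall t, [/\ (phi @: Mf t)%VS = <<[seq phi m | m <- [seq m <- B2 | m \in Mf t]]>>%VS,
    free ([seq phi m | m <- [seq m <- B2 | m \in Mf t]]) &
    {in B2, forall m, (phi m \in (phi @: Mf t)%VS) = (m \in Mf t)}].
  move=> t; have bS := hB t.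
  set L := [seq m <- B2 | m \in Mf t].
  have fL : free [seq phi m | m <- L] by rewrite /L filter_mask map_mask; exact: free_mask_aux.
  have spL : (phi @: Mf t)%VS = <<[seq phi m | m <- L]>>%VS.
    rewrite -(span_basis bS) limg_span; apply/eqP; rewrite eqEsubv; apply/andP; split;
      apply/span_subvP => w /mapP [v vin ->].
      case: (eqVneq (phi v) 0) => [->|nz]; first exact: mem0v.
      apply: memv_span; apply: map_f.
      by move: vin; rewrite /L /B2 !mem_filter nz => /andP[-> ->].
    apply: memv_span; apply: map_f.
    by move: vin; rewrite /L /B2 !mem_filter => /andP[-> /andP[_ ->]].
  split => //.
  set Q := [seq m <- B2 | phi m \in (phi @: Mf t)%VS].
  have fQ : free [seq phi m | m <- Q] by rewrite /Q filter_mask map_mask; exact: free_mask_aux.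
  have subQ : (<<[seq phi m | m <- Q]>> <= phi @: Mf t)%VS.
    by apply/span_subvP => w /mapP [v vin ->]; move: vin; rewrite mem_filter => /andP[].
  have hsz : (size Q <= size L)%N.
    rewrite -(size_map phi Q) -(size_map phi L) -(eqP fQ) -(eqP fL) -spL.
    exact: dimvS.
  move: hsz; rewrite /Q /L !size_filter => hsz.
  move: hsz; apply: count_imp_aux => m _ /=; exact: memv_img.
split.
- move=> t; have [spL fL eqL] := key t.
  rewrite /basis_of; set K := filter _ _.
  have fK : free K by apply: filter_free; apply: filter_free.
  rewrite fK andbT eqEdim; apply/andP; split.
    apply/span_subvP => v; rewrite mem_filter => /andP[] //.
  rewrite (eqP fK).
  have dS : \dim (Mf t) = size [seq v <- B | v \in Mf t].
    by rewrite -{1}(span_basis (hB t)) (eqP (basis_free (hB t))).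
  have := limg_ker_dim phi (Mf t); rewrite capvC spL (eqP fL) size_map dS /ker_filt => hd.
  suff : (size [seq v <- B | v \in Mf t] <= size K + size [seq m <- B2 | m \in Mf t])%N. rewrite -hd leq_add2r. by [].
  rewrite -(count_predC (fun v => phi v == 0) [seq v <- B | v \in Mf t]).
  rewrite !count_filter /K /B2 !size_filter !count_filter leq_add //.
    apply: eq_leq; apply: eq_count => v /=; rewrite memv_cap memv_ker.
    by case: (phi v == 0); case: (v \in Mf t).
  apply: eq_leq; apply: eq_count => v /=.
  by case: (phi v == 0); case: (v \in Mf t).
- move=> t; have [spL fL eqL] := key t.
  rewrite /im_filt filter_map.
  rewrite (@eq_in_filter _ _ (fun m => m \in Mf t)); last first.
    by move=> v vin /=; exact: eqL.
  by rewrite /basis_of -spL eqxx fL.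
- move=> m; rewrite mem_filter => /andP[/eqP h _]; apply/setP => t.
  by rewrite !inE /ker_filt memv_cap memv_ker h eqxx.
- move=> m mB2; apply/setP => t; rewrite !inE /im_filt.
  by have [_ _ ->] := key t.
Qed.
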